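(* Let $2\le n\le k$, $\alpha\in\mathbb N$, let $s_1,\dots,s_{n-1}$ be nonnegative integers, and let $$w=[x_1,x_2]^{\alpha^{s_1}}[x_2,x_3]^{\alpha^{s_2}}\cdots[x_{n-1},x_n]^{\alpha^{s_{n-1}}}\in F_k.$$ Let $n'=2\lfloor n/2\rfloor$. Then there exist nonnegative integers $t_1,t_3,\dots,t_{n'-1}$, each lying in $\{0,1\}\cup\{\alpha^{r}: r \text{ a positive integer}\}$, such that on any nilpotent group $G$ of nilpotency class $2$ the word $w$ is $F_k(G)$-automorphic to $[x_1,x_2]^{t_1}[x_3,x_4]^{t_3}\cdots[x_{n'-1},x_{n'}]^{t_{n'-1}}$.
   Context: $F_k$ is the free group on $x_1,\dots,x_k$. For a group $G$, each $w\in F_k$ induces a word map $G^k\to G$ by evaluation; the set $F_k(G)$ of all such word maps is a group under pointwise multiplication (the image of $F_k$ under $w\mapsto$ its word map). Two words $w_1,w_2\in F_k$ are called $F_k(G)$-automorphic if there is a group automorphism of $F_k(G)$ sending the word map of $w_1$ to the word map of $w_2$. Commutators are $[a,b]:=aba^{-1}b^{-1}$. *)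

(* Defs.v *)
From mathcomp Require Import all_boot.
Set Implicit Arguments. Unset Strict Implicit. Unset Printing Implicit Defensive.

Record Grp := {
  gcar :> Type;
  gmul : gcar -> gcar -> gcar;
  gone : gcar;
  ginv : gcar -> gcar;
  gmulA : forall x y z, gmul x (gmul y z) = gmul (gmul x y) z;
  gmul1l : forall x, gmul gone x = x;
  gmulVl : forall x, gmul (ginv x) x = gone }.

Definition gcomm (G : Grp) (a b : G) : G :=
  gmul a (gmul b (gmul (ginv a) (ginv b))).

Definition nil_class2 (G : Grp) : Prop :=
  (forall x y z : G, gmul (gcomm x y) z = gmul z (gcomm x y)) /\
  (exists x y : G, gcomm x y <> gone G).

(* Words in x_1..x_k, i.e. (representatives of) elements of F_k. *)
Inductive word (k : nat) : Type :=
| wvar of 'I_k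
| wone
| wmul of word k & word k
| winv of word k.

Definition wcomm k (a b : word k) : word k :=
  wmul a (wmul b (wmul (winv a) (winv b))).

Fixpoint wpow k (a : word k) (m : nat) : word k :=
  if m is m'.+1 then wmul a (wpow a m') else wone k.

Definition wprod k (s : seq (word k)) : word k := foldr (@wmul k) (wone k) s.

(* variable with 0-based index i (i.e. x_{i+1}); only used with i < k *)
Definition xvar k (i : nat) : word k :=
  if insub i is Some o then wvar o else wone k.

Fixpoint wmap (G : Grp) k (w : word k) (g : 'I_k -> G) : G :=
  match w with
  | wvar i => g i
  | wone => gone G
  | wmul a b => gmul (wmap a g) (wmap b g)
  | winv a => ginv (wmap a g)
  end.

Definition is_wordmap (G : Grp) k (f : ('I_k -> G) -> G) : Prop :=
  exists w : word k, f = wmap w.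

Definition Fk_aut (G : Grp) k (phi : (('I_k -> G) -> G) -> (('I_k -> G) -> G)) : Prop :=
  [/\ (forall f, is_wordmap f -> is_wordmap (phi f)),
      (forall f1 f2, is_wordmap f1 -> is_wordmap f2 ->
          phi (fun g => gmul (f1 g) (f2 g)) = (fun g => gmul (phi f1 g) (phi f2 g))),
      (forall f1 f2, is_wordmap f1 -> is_wordmap f2 -> phi f1 = phi f2 -> f1 = f2)
    & (forall f2, is_wordmap f2 -> exists2 f1, is_wordmap f1 & phi f1 = f2)].

Definition Fk_automorphic (G : Grp) k (w1 w2 : word k) : Prop :=
  exists phi, Fk_aut phi /\ phi (wmap (G := G) w1) = wmap w2.

Definition chain_word k (n a : nat) (s : nat -> nat) : word k :=
  wprod [seq wpow (wcomm (xvar k i.-1) (xvar k i)) (a ^ s i) | i <- iota 1 n.-1].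

Definition pair_word k (n : nat) (t : nat -> nat) : word k :=
  wprod [seq wpow (wcomm (xvar k (m.*2)) (xvar k (m.*2.+1))) (t (m.*2.+1)) | m <- iota 0 n./2].

(* Main.v *)
Require Import Defs.
From mathcomp Require Import all_boot.
From mathcomp Require Import zify.
From Stdlib Require Import FunctionalExtensionality Lia.
Set Implicit Arguments. Unset Strict Implicit. Unset Printing Implicit Defensive.


Lemma gmulV (G : Grp) (x : G) : gmul x (ginv x) = gone G.
Proof.
have e : gmul x (ginv x) = gmul (gmul (ginv (ginv x)) (ginv x)) (gmul x (ginv x)).
  by rewrite gmulVl gmul1l.
by rewrite e -gmulA (gmulA (ginv x)) gmulVl gmul1l gmulVl.
Qed.

Lemma gmul1r (G : Grp) (x : G) : gmul x (gone G) = x.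
Proof. by rewrite -(gmulVl x) gmulA gmulV gmul1l. Qed.

Lemma gmulKl (G : Grp) (x y : G) : gmul (ginv x) (gmul x y) = y.
Proof. by rewrite gmulA gmulVl gmul1l. Qed.

Lemma gmulKr (G : Grp) (x y : G) : gmul x (gmul (ginv x) y) = y.
Proof. by rewrite gmulA gmulV gmul1l. Qed.

Lemma ginvK (G : Grp) (x : G) : ginv (ginv x) = x.
Proof. by rewrite -[RHS]gmul1l -(gmulVl (ginv x)) -gmulA gmulVl gmul1r. Qed.

Lemma ginv_uniq (G : Grp) (x y : G) : gmul x y = gone G -> ginv x = y.
Proof. by move=> e; rewrite -(gmulKl x y) e gmul1r. Qed.

Lemma ginvM (G : Grp) (x y : G) : ginv (gmul x y) = gmul (ginv y) (ginv x).
Proof. by apply: ginv_uniq; rewrite -gmulA (gmulA y) gmulV gmul1l gmulV. Qed.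

Lemma ginv1 (G : Grp) : ginv (gone G) = gone G.
Proof. by apply: ginv_uniq; rewrite gmul1l. Qed.

Fixpoint gpow (G : Grp) (x : G) (n : nat) : G :=
  if n is n'.+1 then gmul x (gpow x n') else gone G.

Lemma gpowD (G : Grp) (x : G) m n : gpow x (m + n) = gmul (gpow x m) (gpow x n).
Proof. by elim: m => [|m IH] /=; rewrite ?gmul1l // IH gmulA. Qed.

Lemma gpowM (G : Grp) (x : G) m n : gpow x (m * n) = gpow (gpow x m) n.
Proof. by elim: n => [|n IH]; rewrite ?muln0 // mulnS gpowD IH. Qed.

Lemma gpowSr (G : Grp) (x : G) n : gpow x n.+1 = gmul (gpow x n) x.
Proof. by rewrite -addn1 gpowD /= gmul1r. Qed.

Lemma gpowVK (G : Grp) (x : G) n : gmul (gpow (ginv x) n) (gpow x n) = gone G.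
Proof.
elim: n => [|n IH]; first by rewrite /= gmul1l.
by rewrite gpowSr {2}/gpow -/gpow -gmulA (gmulA (ginv x)) gmulVl gmul1l IH.
Qed.

Definition central (G : Grp) (z : G) := forall w, gmul z w = gmul w z.

Lemma central_pow (G : Grp) (z : G) n : central z -> central (gpow z n).
Proof.
move=> cz w; elim: n => [|n IH] /=; first by rewrite gmul1l gmul1r.
by rewrite -gmulA IH gmulA cz -gmulA.
Qed.

Lemma gpowMc (G : Grp) (x y : G) n : central y ->
  gpow (gmul x y) n = gmul (gpow x n) (gpow y n).
Proof.
move=> cy; elim: n => [|n IH] /=; first by rewrite gmul1l.
rewrite IH -!gmulA; congr gmul.
by rewrite !gmulA cy.
Qed.

Lemma cent_swap (G : Grp) (z X Y : G) : central z -> gmul X (gmul z Y) = gmul z (gmul X Y).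
Proof. by move=> cz; rewrite gmulA -cz gmulA. Qed.

Lemma gcommV (G : Grp) (x y : G) : ginv (gcomm x y) = gcomm y x.
Proof. by rewrite /gcomm !ginvM !ginvK -!gmulA. Qed.


Lemma gcommMl (G : Grp) (HG : forall x y z : G, gmul (gcomm x y) z = gmul z (gcomm x y))
  (x y z : G) : gcomm (gmul x y) z = gmul (gcomm x z) (gcomm y z).
Proof.
rewrite (HG x z (gcomm y z)) [gcomm x z]/gcomm (gmulA (gcomm y z) x) (HG y z x).
by rewrite /gcomm ginvM -!gmulA (gmulKl z).
Qed.

Lemma gcommMr (G : Grp) (HG : forall x y z : G, gmul (gcomm x y) z = gmul z (gcomm x y))
  (x y z : G) : gcomm x (gmul y z) = gmul (gcomm x y) (gcomm x z).
Proof.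
by rewrite -(gcommV (gmul y z)) gcommMl // ginvM !gcommV HG.
Qed.

Lemma gcommXl (G : Grp) (HG : forall x y z : G, gmul (gcomm x y) z = gmul z (gcomm x y))
  (x z : G) n : gcomm (gpow x n) z = gpow (gcomm x z) n.
Proof.
elim: n => [|n IH] /=; last by rewrite gcommMl // IH.
by rewrite /gcomm ginv1 !gmul1l gmulV.
Qed.

Lemma gcommXr (G : Grp) (HG : forall x y z : G, gmul (gcomm x y) z = gmul z (gcomm x y))
  (x z : G) n : gcomm x (gpow z n) = gpow (gcomm x z) n.
Proof.
elim: n => [|n IH] /=; last by rewrite gcommMr // IH.
by rewrite /gcomm ginv1 gmul1l gmul1r gmulV.
Qed.

Lemma gpowKV (G : Grp) (x : G) n : gmul (gpow x n) (gpow (ginv x) n) = gone G.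
Proof. by rewrite -{1}(ginvK x) gpowVK. Qed.

Lemma wmap_pow (G : Grp) k (w : word k) n (g : 'I_k -> G) : wmap (wpow w n) g = gpow (wmap w g) n.
Proof. by elim: n => //= n ->. Qed.

Fixpoint wsubst k (w : word k) (u : 'I_k -> word k) : word k :=
  match w with
  | wvar i => u i
  | wone => wone k
  | wmul a b => wmul (wsubst a u) (wsubst b u)
  | winv a => winv (wsubst a u)
  end.

Lemma wmap_subst (G : Grp) k (w : word k) u (g : 'I_k -> G) :
  wmap (wsubst w u) g = wmap w (fun i => wmap (u i) g).
Proof. by elim: w => //= [a -> b ->|a ->]. Qed.

Definition AutR (G : Grp) k (F1 F2 : ('I_k -> G) -> G) :=
  exists phi, Fk_aut phi /\ phi F1 = F2.

Lemma aut_subst (G : Grp) k (u v : 'I_k -> word k) :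
  (forall g : 'I_k -> G, (fun i => wmap (v i) (fun j => wmap (u j) g)) = g) ->
  (forall g : 'I_k -> G, (fun i => wmap (u i) (fun j => wmap (v j) g)) = g) ->
  Fk_aut (fun f : ('I_k -> G) -> G => fun g => f (fun i => wmap (u i) g)).
Proof.
move=> H1 H2; split.
- move=> f [w ->]; exists (wsubst w u); apply: functional_extensionality => g.
  by rewrite wmap_subst.
- by [].
- move=> f1 f2 _ _ E; apply: functional_extensionality => g.
  have := congr1 (fun F => F (fun i => wmap (v i) g)) E => /=.
  by rewrite H2.
- move=> f2 [w ->]; exists (wmap (wsubst w v)); first by exists (wsubst w v).
  apply: functional_extensionality => g; rewrite wmap_subst.
  by rewrite H1.
Qed.

Lemma AutR_trans (G : Grp) k (F1 F2 F3 : ('I_k -> G) -> G) :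
  AutR F1 F2 -> AutR F2 F3 -> AutR F1 F3.
Proof.
move=> [phi1 [[a1 b1 c1 d1] e1]] [phi2 [[a2 b2 c2 d2] e2]].
exists (fun f => phi2 (phi1 f)); split; last by rewrite e1.
split.
- by move=> f /a1 /a2.
- by move=> f1 f2 w1 w2; rewrite b1 // b2 //; apply: a1.
- by move=> f1 f2 w1 w2 /c2 E; apply: c1 => //; apply: E; apply: a1.
- move=> f3 /d2 [f2 w2 <-]; have [f1 w1 e] := d1 f2 w2.
  by exists f1 => //; rewrite e.
Qed.

Lemma AutR_refl (G : Grp) k (F : ('I_k -> G) -> G) : AutR F F.
Proof.
exists id; split => //; split => //.
by move=> f2 w; exists f2.
Qed.

Definition gv (G : Grp) k (g : 'I_k -> G) (m : nat) : G := wmap (xvar k m) g.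

Lemma gvE (G : Grp) k (g : 'I_k -> G) (o : 'I_k) : gv g o = g o.
Proof. by rewrite /gv /xvar valK. Qed.

Lemma gv_ge (G : Grp) k (g : 'I_k -> G) m : k <= m -> gv g m = gone G.
Proof. by move=> km; rewrite /gv /xvar insubN // -leqNgt. Qed.

Lemma gv_lt (G : Grp) k (g : 'I_k -> G) m (Hm : m < k) : gv g m = g (Ordinal Hm).
Proof. by rewrite -gvE. Qed.

Definition AutN (G : Grp) k (P1 P2 : (nat -> G) -> G) :=
  AutR (fun g : 'I_k -> G => P1 (gv g)) (fun g : 'I_k -> G => P2 (gv g)).

Lemma AutN_trans (G : Grp) k (P1 P2 P3 : (nat -> G) -> G) :
  AutN k P1 P2 -> AutN k P2 P3 -> AutN k P1 P3.
Proof. exact: AutR_trans. Qed.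

Lemma AutN_refl (G : Grp) k (P : (nat -> G) -> G) : AutN k P P.
Proof. exact: AutR_refl. Qed.

Lemma AutN_eql (G : Grp) k (P1 P1' P2 : (nat -> G) -> G) :
  (forall h, P1 h = P1' h) -> AutN k P1' P2 -> AutN k P1 P2.
Proof.
move=> E; rewrite /AutN.
have -> : (fun g : 'I_k -> G => P1 (gv g)) = (fun g => P1' (gv g)) by
  apply: functional_extensionality => g; rewrite E.
by [].
Qed.

Lemma AutN_eqr (G : Grp) k (P1 P2 P2' : (nat -> G) -> G) :
  (forall h, P2 h = P2' h) -> AutN k P1 P2 -> AutN k P1 P2'.
Proof.
move=> E; rewrite /AutN.
have -> : (fun g : 'I_k -> G => P2 (gv g)) = (fun g => P2' (gv g)) by
  apply: functional_extensionality => g; rewrite E.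
by [].
Qed.

Definition upd (G : Grp) (h : nat -> G) (i : nat) (x : G) : nat -> G :=
  fun m => if m == i then x else h m.

Lemma AutN_move (G : Grp) k (P : (nat -> G) -> G) i j q :
  i < k -> j < k -> i != j ->
  AutN k P (fun h => P (upd h i (gmul (h i) (gpow (h j) q)))).
Proof.
move=> ik jk ij.
pose u := fun o : 'I_k => if val o == i then wmul (wvar o) (wpow (xvar k j) q) else wvar o.
pose v := fun o : 'I_k => if val o == i then wmul (wvar o) (wpow (winv (xvar k j)) q) else wvar o.
have gvj : forall (g : 'I_k -> G) (f : 'I_k -> word k),
   (forall o, val o != i -> f o = wvar o) -> gv (fun o => wmap (f o) g) j = gv g j.
  by move=> g f Hf; rewrite !(gv_lt _ jk) /= Hf //= eq_sym.
have H1 : forall g : 'I_k -> G, (fun o => wmap (v o) (fun o' => wmap (u o') g)) = g.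
  move=> g; apply: functional_extensionality => o; rewrite /v.
  case: eqP => oi /=; last by rewrite /u; case: eqP.
  rewrite wmap_pow /= -/(gv _ j).
  rewrite (gvj g u); last by move=> o' /negbTE; rewrite /u => ->.
  rewrite /u oi eqxx /= wmap_pow -/(gv g j) -gmulA.
  by rewrite gpowKV gmul1r.
have H2 : forall g : 'I_k -> G, (fun o => wmap (u o) (fun o' => wmap (v o') g)) = g.
  move=> g; apply: functional_extensionality => o; rewrite /u.
  case: eqP => oi /=; last by rewrite /v; case: eqP.
  rewrite wmap_pow /= -/(gv _ j).
  rewrite (gvj g v); last by move=> o' /negbTE; rewrite /v => ->.
  by rewrite /v oi eqxx /= wmap_pow -/(gv g j) -gmulA gpowVK gmul1r.
exists (fun f : ('I_k -> G) -> G => fun g => f (fun o => wmap (u o) g)); split.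
  exact: aut_subst H1 H2.
apply: functional_extensionality => g; congr P.
apply: functional_extensionality => m; rewrite /upd.
case: (ltnP m k) => mk.
  rewrite (gv_lt _ mk) /u /=; case: eqP => mi.
    by subst i; rewrite /= wmap_pow -/(gv g j) -(gv_lt g mk).
  by rewrite /= -(gv_lt g mk).
have -> : (m == i) = false by apply/negbTE/eqP => mi; move: ik; rewrite -mi ltnNge mk.
by rewrite !gv_ge.
Qed.

Lemma AutN_perm (G : Grp) k (P : (nat -> G) -> G) (f f' : nat -> nat) :
  (forall m, m < k -> f m < k) -> (forall m, m < k -> f' m < k) ->
  (forall m, m < k -> f (f' m) = m) -> (forall m, m < k -> f' (f m) = m) ->
  (forall m, k <= m -> f m = m) ->
  AutN k P (fun h => P (fun m => h (f m))).
Proof.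
move=> fk f'k ff' f'f fid.
pose u := fun o : 'I_k => xvar k (f o).
pose v := fun o : 'I_k => xvar k (f' o).
have H1 : forall g : 'I_k -> G, (fun o => wmap (v o) (fun o' => wmap (u o') g)) = g.
  move=> g; apply: functional_extensionality => o.
  rewrite /v -/(gv _ _) (gv_lt _ (f'k _ (ltn_ord o))) /u /= ff' //.
  exact: gvE.
have H2 : forall g : 'I_k -> G, (fun o => wmap (u o) (fun o' => wmap (v o') g)) = g.
  move=> g; apply: functional_extensionality => o.
  rewrite /u -/(gv _ _) (gv_lt _ (fk _ (ltn_ord o))) /v /= f'f //.
  exact: gvE.
exists (fun F : ('I_k -> G) -> G => fun g => F (fun o => wmap (u o) g)); split.
  exact: aut_subst H1 H2.
apply: functional_extensionality => g; congr P.
apply: functional_extensionality => m.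
case: (ltnP m k) => mk.
  by rewrite (gv_lt _ mk).
by rewrite fid // !gv_ge.
Qed.

Fixpoint chainF (G : Grp) (a p : nat) (es : seq nat) (h : nat -> G) : G :=
  if es is e :: es' then gmul (gpow (gcomm (h p) (h p.+1)) (a ^ e)) (chainF a p.+1 es' h)
  else gone G.

Fixpoint pairsF (G : Grp) (a p : nat) (ts : seq nat) (h : nat -> G) : G :=
  if ts is t :: ts' then gmul (gpow (gcomm (h p) (h p.+1)) (a ^ t)) (pairsF a p.+2 ts' h)
  else gone G.

Lemma chainF_cat (G : Grp) a p pre e post (h : nat -> G) :
  chainF a p (pre ++ e :: post) h =
  gmul (chainF a p pre h)
    (gmul (gpow (gcomm (h (p + size pre)) (h (p + size pre).+1)) (a ^ e))
          (chainF a (p + size pre).+1 post h)).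
Proof.
elim: pre p => [|e' pre IH] p /=; first by rewrite addn0 gmul1l.
by rewrite IH addSnnS gmulA.
Qed.

Lemma chainF_ext (G : Grp) a es p p' (h h' : nat -> G) :
  (forall i, i <= size es -> h (p + i) = h' (p' + i)) ->
  chainF a p es h = chainF a p' es h'.
Proof.
elim: es p p' => [|e es IH] p p' E //=.
rewrite -(addn0 p) -(addn0 p') -!addnS !E //; congr gmul.
by apply: IH => i hi; rewrite -!addnA; apply: E; rewrite add1n ltnS.
Qed.

Lemma local_min (es : seq nat) : 1 < size es ->
  (exists e1 e2 post, es = [:: e1, e2 & post] /\ e1 <= e2) \/
  (exists pre eL eM, es = pre ++ [:: eL; eM] /\ eM <= eL) \/
  (exists pre eL eM eR post, es = pre ++ [:: eL, eM, eR & post] /\ eM <= eL /\ eM <= eR).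
Proof.
elim: es => [|e1 es IH] //=; case: es IH => [|e2 rest] IH //= _.
case: (leqP e1 e2) => h12; first by left; exists e1, e2, rest.
right; case: rest IH => [|e3 rest] IH.
  by left; exists [::], e1, e2; split => //; apply: ltnW.
case: (IH isT) => [[e2' [e3' [post [E le]]]]|[[pre [eL [eM [E le]]]]|[pre [eL [eM [eR [post [E [l1 l2]]]]]]]]].
- case: E => ? ? ?; subst.
  by right; exists [::], e1, e2', e3', post; split => //; split => //; apply: ltnW.
- by left; exists (e1 :: pre), eL, eM; rewrite /= E.
- by right; exists (e1 :: pre), eL, eM, eR, post; rewrite /= E.
Qed.

Definition rotp (p j m : nat) : nat :=
  if m < p then m else if m < p + j then m.+2 else if m == p + j then p
  else if m == (p + j).+1 then p.+1 else m.
Definition rotinv (p j m : nat) : nat :=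
  if m < p then m else if m < p.+2 then m + j else if m < p + j + 2 then m - 2 else m.

Ltac ifsolve := repeat match goal with |- context [if ?b then _ else _] =>
  lazymatch b with context [if _ then _ else _] => fail | _ => case: (boolP b) => /= ? end end; try lia.

Lemma rot_ok p j k : p + j + 1 < k ->
  [/\ (forall m, m < k -> rotp p j m < k), (forall m, m < k -> rotinv p j m < k),
      (forall m, m < k -> rotp p j (rotinv p j m) = m),
      (forall m, m < k -> rotinv p j (rotp p j m) = m) &
      (forall m, k <= m -> rotp p j m = m)].
Proof.
move=> hk; split=> m hm; rewrite /rotp /rotinv.
- ifsolve.
- ifsolve.
- ifsolve.
- ifsolve.
- ifsolve.
Qed.

Definition cls2 (G : Grp) := forall x y z : G, gmul (gcomm x y) z = gmul z (gcomm x y).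
Definition localR (G : Grp) (p : nat) (R : (nat -> G) -> G) :=
  forall h h', (forall m, m < p -> h m = h' m) -> R h = R h'.

Lemma kill_pow (G : Grp) (HG : cls2 G) (c x y : G) q A :
  gpow (gmul c (gpow (gcomm x y) q)) A = gmul (gpow c A) (gpow (gcomm x y) (q * A)).
Proof. by rewrite gpowMc ?gpowM //; apply: central_pow => w; apply: HG. Qed.

Lemma cancel1 (G : Grp) (x y T : G) n :
  gmul (gpow (gcomm y x) n) (gmul (gpow (gcomm x y) n) T) = T.
Proof. by rewrite -gcommV gmulA gpowVK gmul1l. Qed.

Lemma cancel2 (G : Grp) (x y T : G) n :
  gmul (gpow (gcomm x y) n) (gmul (gpow (gcomm y x) n) T) = T.
Proof. by rewrite -(gcommV x y) gmulA gpowKV gmul1l. Qed.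

Lemma centc (G : Grp) (HG : cls2 G) (x y : G) n : central (gpow (gcomm x y) n).
Proof. by apply: central_pow => w; apply: HG. Qed.

Lemma upd_eq (G : Grp) (h : nat -> G) i x : upd h i x i = x.
Proof. by rewrite /upd eqxx. Qed.

Lemma upd_neq (G : Grp) (h : nat -> G) i x m : m != i -> upd h i x m = h m.
Proof. by rewrite /upd => /negbTE ->. Qed.

Lemma comp1 (G : Grp) (HG : cls2 G) a p e1 e2 post (R : (nat -> G) -> G) (h : nat -> G) :
  localR p R -> e1 <= e2 ->
  let X := gmul (h p) (gpow (h p.+2) (a ^ (e2 - e1))) in
  gmul (R (upd h p X)) (chainF a p [:: e1, e2 & post] (upd h p X)) =
  gmul (gmul (R h) (gpow (gcomm (h p) (h p.+1)) (a ^ e1))) (chainF a p.+2 post h).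
Proof.
move=> HR le X.
rewrite (HR _ h); last by move=> m mp; rewrite upd_neq //; lia.
rewrite /= (@chainF_ext _ a post p.+2 p.+2 _ h); last first.
  by move=> i _; rewrite upd_neq //; lia.
rewrite upd_eq !upd_neq; try lia.
rewrite /X gcommMl // gcommXl // kill_pow //.
have -> : a ^ (e2 - e1) * a ^ e1 = a ^ e2 by rewrite -expnD subnK.
by rewrite -gmulA cancel1 gmulA.
Qed.

Lemma comp2 (G : Grp) (HG : cls2 G) a p pre eL eM (R : (nat -> G) -> G) (h : nat -> G) :
  localR p R -> eM <= eL ->
  let v := p + size pre in
  let X := gmul (h v.+2) (gpow (h v) (a ^ (eL - eM))) in
  gmul (R (upd h v.+2 X)) (chainF a p (pre ++ [:: eL; eM]) (upd h v.+2 X)) =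
  gmul (R h) (gmul (chainF a p pre h)
     (gmul (gpow (gcomm (h v.+1) (h v.+2)) (a ^ eM)) (gone G))).
Proof.
move=> HR le v X.
rewrite (HR _ h); last by move=> m mp; rewrite upd_neq //; lia.
rewrite chainF_cat -/v (@chainF_ext _ a pre p p _ h); last first.
  by move=> i hi; rewrite upd_neq //; lia.
rewrite /= upd_eq !upd_neq; try lia.
rewrite /X gcommMr // gcommXr // kill_pow //.
have -> : a ^ (eL - eM) * a ^ eM = a ^ eL by rewrite -expnD subnK.
congr gmul; congr gmul.
by rewrite -gmulA (cent_swap _ _ (centc HG _ _ _)) cancel2.
Qed.

Lemma comp3a (G : Grp) (HG : cls2 G) a p pre eL eM eR post (R : (nat -> G) -> G) (h : nat -> G) :
  localR p R -> eM <= eL ->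
  let v := p + size pre in
  let X := gmul (h v.+2) (gpow (h v) (a ^ (eL - eM))) in
  gmul (R (upd h v.+2 X)) (chainF a p (pre ++ [:: eL, eM, eR & post]) (upd h v.+2 X)) =
  gmul (R h) (gmul (chainF a p pre h)
     (gmul (gpow (gcomm (h v.+1) (h v.+2)) (a ^ eM))
     (gmul (gpow (gcomm (h v.+2) (h v.+3)) (a ^ eR))
     (gmul (gpow (gcomm (h v) (h v.+3)) (a ^ (eL - eM + eR)))
           (chainF a v.+3 post h))))).
Proof.
move=> HR le v X.
rewrite (HR _ h); last by move=> m mp; rewrite upd_neq //; lia.
rewrite chainF_cat -/v (@chainF_ext _ a pre p p _ h); last first.
  by move=> i hi; rewrite upd_neq //; lia.
rewrite /= (@chainF_ext _ a post v.+3 v.+3 _ h); last first.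
  by move=> i hi; rewrite upd_neq //; lia.
rewrite upd_eq !upd_neq; try lia.
rewrite /X gcommMr // gcommXr // kill_pow // gcommMl // gcommXl // kill_pow //.
have -> : a ^ (eL - eM) * a ^ eM = a ^ eL by rewrite -expnD subnK.
have -> : a ^ (eL - eM) * a ^ eR = a ^ (eL - eM + eR) by rewrite -expnD.
congr gmul; congr gmul.
by rewrite -!gmulA (cent_swap _ _ (centc HG _ _ _)) cancel2.
Qed.

Lemma comp3b (G : Grp) (HG : cls2 G) a p pre eM eR K post (R : (nat -> G) -> G) (h : nat -> G) :
  localR p R -> eM <= eR ->
  let v := p + size pre in
  let Psi := fun h : nat -> G => gmul (R h) (gmul (chainF a p pre h)
     (gmul (gpow (gcomm (h v.+1) (h v.+2)) (a ^ eM))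
     (gmul (gpow (gcomm (h v.+2) (h v.+3)) (a ^ eR))
     (gmul (gpow (gcomm (h v) (h v.+3)) K)
           (chainF a v.+3 post h))))) in
  Psi (upd h v.+1 (gmul (h v.+1) (gpow (h v.+3) (a ^ (eR - eM))))) =
  gmul (R h) (gmul (chainF a p pre h)
     (gmul (gpow (gcomm (h v.+1) (h v.+2)) (a ^ eM))
     (gmul (gpow (gcomm (h v) (h v.+3)) K)
           (chainF a v.+3 post h)))).
Proof.
move=> HR le v Psi; rewrite /Psi.
rewrite (HR _ h); last by move=> m mp; rewrite upd_neq //; lia.
rewrite (@chainF_ext _ a pre p p _ h); last first.
  by move=> i hi; rewrite upd_neq //; lia.
rewrite (@chainF_ext _ a post v.+3 v.+3 _ h); last first.
  by move=> i hi; rewrite upd_neq //; lia.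
rewrite upd_eq !upd_neq; try lia.
rewrite gcommMl // gcommXl // kill_pow //.
have -> : a ^ (eR - eM) * a ^ eM = a ^ eR by rewrite -expnD subnK.
by rewrite -gmulA cancel1.
Qed.

Lemma rot2 (G : Grp) (HG : cls2 G) a p pre M (R : (nat -> G) -> G) (h : nat -> G) :
  localR p R ->
  let v := p + size pre in
  let Psi := fun h : nat -> G => gmul (R h) (gmul (chainF a p pre h)
     (gmul (gpow (gcomm (h v.+1) (h v.+2)) M) (gone G))) in
  Psi (fun m => h (rotp p (size pre).+1 m)) =
  gmul (gmul (R h) (gpow (gcomm (h p) (h p.+1)) M)) (chainF a p.+2 pre h).
Proof.
move=> HR v Psi; rewrite /Psi.
rewrite (HR _ h); last by move=> m mp; rewrite /rotp; ifsolve.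
rewrite (@chainF_ext _ a pre p p.+2 _ h); last first.
  by move=> i hi; rewrite /rotp; ifsolve; congr h; lia.
have -> : rotp p (size pre).+1 v.+1 = p by rewrite /rotp /v; ifsolve.
have -> : rotp p (size pre).+1 v.+2 = p.+1 by rewrite /rotp /v; ifsolve.
by rewrite gmul1r -(centc HG) gmulA.
Qed.

Lemma rot3 (G : Grp) (HG : cls2 G) a p pre M e post (R : (nat -> G) -> G) (h : nat -> G) :
  localR p R ->
  let v := p + size pre in
  let Psi := fun h : nat -> G => gmul (R h) (gmul (chainF a p pre h)
     (gmul (gpow (gcomm (h v.+1) (h v.+2)) M)
     (gmul (gpow (gcomm (h v) (h v.+3)) (a ^ e))
           (chainF a v.+3 post h)))) in
  Psi (fun m => h (rotp p (size pre).+1 m)) =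
  gmul (gmul (R h) (gpow (gcomm (h p) (h p.+1)) M)) (chainF a p.+2 (pre ++ e :: post) h).
Proof.
move=> HR v Psi; rewrite /Psi.
rewrite (HR _ h); last by move=> m mp; rewrite /rotp; ifsolve.
rewrite (@chainF_ext _ a pre p p.+2 _ h); last first.
  by move=> i hi; rewrite /rotp; ifsolve; congr h; lia.
rewrite (@chainF_ext _ a post v.+3 v.+3 _ h); last first.
  by move=> i hi; rewrite /rotp /v; ifsolve.
have -> : rotp p (size pre).+1 v.+1 = p by rewrite /rotp /v; ifsolve.
have -> : rotp p (size pre).+1 v.+2 = p.+1 by rewrite /rotp /v; ifsolve.
have -> : rotp p (size pre).+1 v = v.+2 by rewrite /rotp /v; ifsolve.
have -> : rotp p (size pre).+1 v.+3 = v.+3 by rewrite /rotp /v; ifsolve.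
rewrite chainF_cat.
have -> : p.+2 + size pre = v.+2 by rewrite /v.
by rewrite (cent_swap _ _ (centc HG _ _ _)) gmulA.
Qed.

Lemma AutN_move_step (G : Grp) k (P Q : (nat -> G) -> G) i j q :
  i < k -> j < k -> i != j ->
  AutN k (fun h => P (upd h i (gmul (h i) (gpow (h j) q)))) Q -> AutN k P Q.
Proof. by move=> ik jk ij; apply: AutN_trans; apply: AutN_move. Qed.

Lemma AutN_perm_step (G : Grp) k (P Q : (nat -> G) -> G) (f f' : nat -> nat) :
  (forall m, m < k -> f m < k) -> (forall m, m < k -> f' m < k) ->
  (forall m, m < k -> f (f' m) = m) -> (forall m, m < k -> f' (f m) = m) ->
  (forall m, k <= m -> f m = m) ->
  AutN k (fun h => P (fun m => h (f m))) Q -> AutN k P Q.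
Proof. by move=> f1 f2 f3 f4 f5; apply: AutN_trans; apply: AutN_perm f1 f2 f3 f4 f5. Qed.

Lemma red k a : forall N L p es, L <= N -> size es = L.-1 -> p + L <= k ->
  exists ts, size ts = L./2 /\
  forall (G : Grp) (HG : cls2 G) (R : (nat -> G) -> G), localR p R ->
    AutN k (fun h => gmul (R h) (chainF a p es h)) (fun h => gmul (R h) (pairsF a p ts h)).
Proof.
elim=> [|N IH] L p es LN Hs Hk.
  have L0 : L = 0 by lia.
  subst L.
  case: es Hs => // _; exists [::]; split => // G HG R HR; exact: AutN_refl.
case: (leqP L 2) => L2.
  case: es Hs => [|e [|e' es]] /= Hs.
  - exists [::]; split; first by move: LN Hk L2 Hs; case: L => [|[|[|]]].
    by move=> G HG R HR; exact: AutN_refl.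
  - exists [:: e]; split; first by move: LN Hk L2 Hs; case: L => [|[|[|]]].
    by move=> G HG R HR; exact: AutN_refl.
  - lia.
have EL : L = (L - 2).+2 by lia.
have EL2 : L./2 = ((L - 2)./2).+1 by rewrite {1}EL.
have [[e1 [e2 [post [Ees le]]]]|[[pre [eL [eM [Ees le]]]]|[pre [eL [eM [eR [post [Ees [le1 le2]]]]]]]]] :
    (exists e1 e2 post, es = [:: e1, e2 & post] /\ e1 <= e2) \/
    (exists pre eL eM, es = pre ++ [:: eL; eM] /\ eM <= eL) \/
    (exists pre eL eM eR post, es = pre ++ [:: eL, eM, eR & post] /\ eM <= eL /\ eM <= eR).
  by apply: local_min; lia.
-
  subst es; move: Hs => /= Hs.
  have [ts' [Hts' Hred]] := IH (L - 2) p.+2 post ltac:(lia) ltac:(lia) ltac:(lia).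
  exists (e1 :: ts'); split; first by rewrite /= Hts' EL2.
  move=> G HG R HR.
  pose R' := fun h : nat -> G => gmul (R h) (gpow (gcomm (h p) (h p.+1)) (a ^ e1)).
  have HR' : localR p.+2 R'.
    move=> h h' E; rewrite /R' (HR h h'); last by move=> m mp; apply: E; lia.
    by rewrite !E //; lia.
  apply: (@AutN_move_step _ k _ _ p p.+2 (a ^ (e2 - e1))); try lia.
  apply: AutN_eql; first by move=> h; apply: (comp1 HG).
  apply: AutN_eqr (Hred G HG R' HR').
  by move=> h; rewrite /R' /= gmulA.
-
  subst es; move: Hs; rewrite size_cat /= => Hs.
  have [ts' [Hts' Hred]] := IH (L - 2) p.+2 pre ltac:(lia) ltac:(lia) ltac:(lia).
  exists (eM :: ts'); split; first by rewrite /= Hts' EL2.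
  move=> G HG R HR.
  pose R' := fun h : nat -> G => gmul (R h) (gpow (gcomm (h p) (h p.+1)) (a ^ eM)).
  have HR' : localR p.+2 R'.
    move=> h h' E; rewrite /R' (HR h h'); last by move=> m mp; apply: E; lia.
    by rewrite !E //; lia.
  apply: (@AutN_move_step _ k _ _ (p + size pre).+2 (p + size pre)      (a ^ (eL - eM))); try lia.
  apply: AutN_eql; first by move=> h; apply: (comp2 HG).
  have [f1 f2 f3 f4 f5] := @rot_ok p (size pre).+1 k ltac:(lia).
  apply: (AutN_perm_step f1 f2 f3 f4 f5).
  apply: AutN_eql; first by move=> h; apply: (rot2 HG).
  apply: AutN_eqr (Hred G HG R' HR').
  by move=> h; rewrite /R' /= gmulA.
-
  subst es; move: Hs; rewrite size_cat /= => Hs.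
  have [ts' [Hts' Hred]] := IH (L - 2) p.+2 (pre ++ (eL - eM + eR) :: post)
     ltac:(lia) ltac:(rewrite size_cat /=; lia) ltac:(lia).
  exists (eM :: ts'); split; first by rewrite /= Hts' EL2.
  move=> G HG R HR.
  pose R' := fun h : nat -> G => gmul (R h) (gpow (gcomm (h p) (h p.+1)) (a ^ eM)).
  have HR' : localR p.+2 R'.
    move=> h h' E; rewrite /R' (HR h h'); last by move=> m mp; apply: E; lia.
    by rewrite !E //; lia.
  apply: (@AutN_move_step _ k _ _ (p + size pre).+2 (p + size pre)      (a ^ (eL - eM))); try lia.
  apply: AutN_eql; first by move=> h; apply: (comp3a HG).
  apply: (@AutN_move_step _ k _ _ (p + size pre).+1 (p + size pre).+3      (a ^ (eR - eM))); try lia.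
  apply: AutN_eql; first by move=> h; apply: (comp3b HG).
  have [f1 f2 f3 f4 f5] := @rot_ok p (size pre).+1 k ltac:(lia).
  apply: (AutN_perm_step f1 f2 f3 f4 f5).
  apply: AutN_eql; first by move=> h; apply: (rot3 HG).
  apply: AutN_eqr (Hred G HG R' HR').
  by move=> h; rewrite /R' /= gmulA.
Qed.

Lemma wmap_chain (G : Grp) k a (s : nat -> nat) (g : 'I_k -> G) m p :
  wmap (wprod [seq wpow (wcomm (xvar k i.-1) (xvar k i)) (a ^ s i) | i <- iota p.+1 m]) g
  = chainF a p [seq s i | i <- iota p.+1 m] (gv g).
Proof.
elim: m p => [|m IH] p //=.
by rewrite wmap_pow IH.
Qed.

Lemma wmap_pairs (G : Grp) k a (ts : seq nat) (g : 'I_k -> G) cnt q :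
  wmap (wprod [seq wpow (wcomm (xvar k m.*2) (xvar k m.*2.+1)) (a ^ nth 0 ts (m.*2.+1)./2)
               | m <- iota q cnt]) g
  = pairsF a q.*2 [seq nth 0 ts m | m <- iota q cnt] (gv g).
Proof.
elim: cnt q => [|cnt IH] q //=.
rewrite wmap_pow IH /= uphalf_double doubleS //.
Qed.

Theorem lemma2p6 (k n a : nat) (s : nat -> nat) :
  2 <= n -> n <= k ->
  exists t : nat -> nat,
    (forall j, odd j -> j < n./2.*2 ->
       t j = 0 \/ t j = 1 \/ exists2 r, 0 < r & t j = a ^ r) /\
    (forall G : Grp, nil_class2 G ->
       Fk_automorphic G (chain_word k n a s) (pair_word k n t)).
Proof.
move=> n2 nk.
have [ts [Hts Hred]] := @red k a n n 0 [seq s i | i <- iota 1 n.-1] (leqnn n)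
  ltac:(by rewrite size_map size_iota) nk.
exists (fun j => a ^ nth 0 ts j./2); split.
  move=> j _ _; case: (nth 0 ts j./2) => [|r].
    by right; left; rewrite expn0.
  by right; right; exists r.+1.
move=> G [HG _].
have [phi [Hphi E]] := Hred G HG (fun _ => gone G) (fun _ _ _ => erefl).
exists phi; split => //.
have -> : wmap (G := G) (chain_word k n a s) = fun g => gmul (gone G) (chainF a 0 [seq s i | i <- iota 1 n.-1] (gv g)).
  apply: functional_extensionality => g; rewrite gmul1l.
  exact: (@wmap_chain G k a s g n.-1 0).
rewrite E; apply: functional_extensionality => g; rewrite gmul1l.
rewrite /pair_word.
have e : [seq nth 0 ts m | m <- iota 0 (size ts)] = ts := mkseq_nth 0 ts.
have := @wmap_pairs G k a ts g n./2 0; rewrite -Hts e /= => ->.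
by [].
Qed.
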